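(* Let $X$ be a space satisfying ${\sf S}_1(\mathcal{G}_K,\mathcal{G})$. Then for each sequence $(\mathcal{U}_n:n\in\mathbb{N})$ of elements of $\mathcal{G}_K$ there is a sequence $(U_n:n\in\mathbb{N})$ with $U_n\in\mathcal{U}_n$ for each $n$, such that for each $x\in X$, for all but finitely many $n$, \[ x\in \bigcup_{T_n<j\le T_{n+1}} U_j, \] where $T_n=1+2+\cdots+n$ is the $n$-th triangular number.
   Context: All spaces are infinite ${\sf T}_1$ topological spaces. $\mathcal{G}_K$ is the family of all collections $\mathcal{U}$ of ${\sf G}_\delta$ subsets of $X$ with $X\notin\mathcal{U}$ such that each compact subset of $X$ is contained in some member of $\mathcal{U}$. $\mathcal{G}$ is the family of all covers of $X$ by ${\sf G}_\delta$ sets. ${\sf S}_1(\mathcal{A},\mathcal{B})$: for each sequence $(A_n)$ of elements of $\mathcal{A}$ there are $B_n\in A_n$ with $\{B_n:n\in\mathbb{N}\}\in\mathcal{B}$. *)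

(* Defs.v *)
From Stdlib Require Import List Arith.

Set Implicit Arguments.

Record topology (X : Type) : Type := {
  is_open : (X -> Prop) -> Prop;
  open_full : is_open (fun _ => True);
  open_empty : is_open (fun _ => False);
  open_union : forall F : (X -> Prop) -> Prop,
      (forall U, F U -> is_open U) ->
      is_open (fun x => exists U, F U /\ U x);
  open_inter : forall U V, is_open U -> is_open V ->
      is_open (fun x => U x /\ V x);
  open_ext : forall U V, (forall x, U x <-> V x) -> is_open U -> is_open V
}.

Definition T1 {X : Type} (tau : topology X) : Prop :=
  forall x y : X, x <> y ->
    exists U, is_open tau U /\ U x /\ ~ U y.

Definition infinite_type (X : Type) : Prop :=
  ~ exists l : list X, forall x : X, In x l.

Definition G_delta {X : Type} (tau : topology X) (A : X -> Prop) : Prop :=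
  exists V : nat -> X -> Prop,
    (forall n, is_open tau (V n)) /\ (forall x, A x <-> forall n, V n x).

Definition compact {X : Type} (tau : topology X) (K : X -> Prop) : Prop :=
  forall F : (X -> Prop) -> Prop,
    (forall U, F U -> is_open tau U) ->
    (forall x, K x -> exists U, F U /\ U x) ->
    exists l : list (X -> Prop),
      (forall U, In U l -> F U) /\ (forall x, K x -> exists U, In U l /\ U x).

Definition G_K {X : Type} (tau : topology X) (UU : (X -> Prop) -> Prop) : Prop :=
  (forall U, UU U -> G_delta tau U) /\
  ~ (exists U, UU U /\ forall x, U x) /\
  (forall K, compact tau K -> exists U, UU U /\ forall x, K x -> U x).

Definition G_cov {X : Type} (tau : topology X) (UU : (X -> Prop) -> Prop) : Prop :=
  (forall U, UU U -> G_delta tau U) /\ (forall x, exists U, UU U /\ U x).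

Definition S1 {X : Type} (A B : ((X -> Prop) -> Prop) -> Prop) : Prop :=
  forall seq : nat -> (X -> Prop) -> Prop,
    (forall n, A (seq n)) ->
    exists Bs : nat -> X -> Prop,
      (forall n, seq n (Bs n)) /\ B (fun V => exists n, V = Bs n).

Fixpoint tri (n : nat) : nat :=
  match n with
  | 0 => 0
  | S m => tri m + S m
  end.

(* Main.v *)
Require Import Defs.
From Stdlib Require Import List Arith Lia Cantor IndefiniteDescription.

Lemma tri_mono : forall n m, n <= m -> tri n <= tri m.
Proof. intros n m H; induction H; simpl; lia. Qed.

Lemma tri_uniq : forall n k n' k', k <= n -> k' <= n' ->
  tri n + 1 + k = tri n' + 1 + k' -> n = n' /\ k = k'.
Proof.
  intros n k n' k' Hk Hk' E.
  destruct (lt_eq_lt_dec n n') as [[H|H]|H].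
  - pose proof (tri_mono (S n) n' H) as T; simpl in T; lia.
  - subst; lia.
  - pose proof (tri_mono (S n') n H) as T; simpl in T; lia.
Qed.

Lemma tri_exists : forall j, exists n k, k <= n /\ S j = tri n + 1 + k.
Proof.
  induction j as [|j IH].
  - exists 0, 0; simpl; lia.
  - destruct IH as [n [k [Hk E]]].
    destruct (Nat.eq_dec k n) as [->|Hne].
    + exists (S n), 0; simpl; lia.
    + exists n, (S k); lia.
Qed.

Section Aux.
Variable X : Type.
Variable tau : topology X.
Variable UU : nat -> (X -> Prop) -> Prop.
Hypothesis HUU : forall n, G_K tau (UU n).

Definition H (k : nat) (B : X -> Prop) : Prop :=
  exists f : nat -> X -> Prop,
    (forall n, UU (tri n + 1 + k) (f n)) /\
    (forall x, B x <-> forall n, k <= n -> f n x).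

Lemma H_GK : forall k, G_K tau (H k).
Proof.
  intro k. split; [|split].
  - intros B [f [Hf HB]].
    assert (Hg : forall n, exists V : nat -> X -> Prop,
      (forall i, is_open tau (V i)) /\ (forall x, f n x <-> forall i, V i x)).
    { intro n. destruct (HUU (tri n + 1 + k)) as [Hd _]. exact (Hd _ (Hf n)). }
    apply functional_choice in Hg as [V HV].
    exists (fun m x => let (n, i) := of_nat m in
                    if k <=? n then V n i x else True).
    split.
    + intro m. destruct (of_nat m) as [n i].
      destruct (k <=? n).
      * apply (proj1 (HV n)).
      * apply open_full.
    + intro x. rewrite HB. split.
      * intros Hx m. destruct (of_nat m) as [n i] eqn:E.
        destruct (k <=? n) eqn:Ek; [|exact I].
        apply Nat.leb_le in Ek. apply (proj2 (HV n)). auto.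
      * intros Hx n Hn. apply (proj2 (HV n)). intro i.
        specialize (Hx (to_nat (n, i))). rewrite cancel_of_to in Hx.
        apply Nat.leb_le in Hn. rewrite Hn in Hx. exact Hx.
  - intros [B [[f [Hf HB]] Hall]].
    destruct (HUU (tri k + 1 + k)) as [_ [Hn _]].
    apply Hn. exists (f k). split; [apply Hf|].
    intro x. apply (proj1 (HB x) (Hall x)). lia.
  - intros C HC.
    assert (Hg : forall n, exists U, UU (tri n + 1 + k) U /\ forall x, C x -> U x).
    { intro n. destruct (HUU (tri n + 1 + k)) as [_ [_ Hc]]. apply Hc, HC. }
    apply functional_choice in Hg as [g Hg].
    exists (fun x => forall n, k <= n -> g n x). split.
    + exists g. split; [intro n; apply (proj1 (Hg n))|]. intro; tauto.
    + intros x Cx n _. apply (proj2 (Hg n)), Cx.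
Qed.
End Aux.

Theorem lemma4p5 (X : Type) (tau : topology X)
  (HT1 : T1 tau) (Hinf : infinite_type X)
  (HS1 : S1 (G_K tau) (G_cov tau)) :
  forall UU : nat -> (X -> Prop) -> Prop,
    (forall n, G_K tau (UU n)) ->
    exists U : nat -> X -> Prop,
      (forall n, UU n (U n)) /\
      (forall x : X, exists N : nat, forall n : nat, N <= n ->
         exists j : nat, tri n < j /\ j <= tri (S n) /\ U j x).
Proof.
  intros UU HUU.
  destruct (HS1 (@H X UU) (@H_GK X tau UU HUU)) as [Bs [HB Hcov]].
  assert (HF : forall k, exists f : nat -> X -> Prop,
    (forall n, UU (tri n + 1 + k) (f n)) /\
    (forall x, Bs k x <-> forall n, k <= n -> f n x)) by (intro k; apply HB).
  apply functional_choice in HF as [F HF].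
  assert (HU : forall j, exists V, UU j V /\
     (forall n k, k <= n -> j = tri n + 1 + k -> V = F k n)).
  { intros [|j].
    - destruct (HUU 0) as [_ [_ Hc]].
      destruct (Hc (fun _ => False)) as [V [HV _]].
      + intros Fm _ _. exists nil. split; simpl; tauto.
      + exists V. split; [exact HV|]. intros; lia.
    - destruct (tri_exists j) as [n [k [Hk E]]].
      exists (F k n). split.
      + rewrite E. apply (proj1 (HF k)).
      + intros n' k' Hk' E'. rewrite E in E'.
        destruct (tri_uniq _ _ _ _ Hk Hk' E') as [-> ->]. reflexivity. }
  apply functional_choice in HU as [U HU].
  exists U. split; [intro n; apply (proj1 (HU n))|].
  intro x. destruct Hcov as [_ Hc]. destruct (Hc x) as [V [[k ->] Hx]].
  exists k. intros n Hn. exists (tri n + 1 + k).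
  split; [lia|]. split; [simpl; lia|].
  rewrite (proj2 (HU _) n k Hn eq_refl).
  apply (proj1 (proj2 (HF k) x) Hx n Hn).
Qed.
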